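(* (1) Let $f:(0,\infty)\to\mathbb{R}$ be completely monotone and suppose $\int_0^{t_0}|f(t)|t^\beta\,\mathrm{d}t<\infty$ for some $\beta\in(-1,\infty)$ and $t_0>0$. Then for every $k\in\mathbb{N}$ there is $C_{k,\beta}>0$ with $$\int_0^{t_0}|f^{(k)}(t)|\,t^{k+\beta}\,\mathrm{d}t\le C_{k,\beta}\int_0^{t_0}f(t)\,t^\beta\,\mathrm{d}t.$$ (2) Let $f:(0,\infty)\to\mathbb{R}$ be smooth with $\int_0^{t_0}|f(t)|t^\beta\,\mathrm{d}t<\infty$ for some $\beta\in(-1,\infty)$ and $t_0>0$, and suppose $f'$ has constant sign. Then $$\int_0^{t_0}|f'(t)|\,t^{1+\beta}\,\mathrm{d}t\le(1+\beta)\int_0^{t_0}|f(t)|\,t^\beta\,\mathrm{d}t+|f(t_0)|\,t_0^{1+\beta}.$$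
   Context: A function $g:(0,\infty)\to\mathbb{R}$ is completely monotone if it is $C^\infty$ and $(-1)^ng^{(n)}(t)\ge0$ for all $t>0$ and $n\in\mathbb{N}$. *)

(* Defs.v *)
From HB Require Import structures.
From mathcomp Require Import all_boot all_order all_algebra.
From mathcomp Require Import all_classical all_reals all_analysis.
Set Implicit Arguments. Unset Strict Implicit. Unset Printing Implicit Defensive.
Import Order.TTheory GRing.Theory Num.Theory.
Local Open Scope ring_scope.
Local Open Scope classical_set_scope.

Definition smooth_pos {R : realType} (f : R -> R) : Prop :=
  forall (n : nat) (t : R), 0 < t -> derivable (derive1n n f) t 1.

Definition completely_monotone {R : realType} (f : R -> R) : Prop :=
  smooth_pos f /\
  forall (n : nat) (t : R), 0 < t -> 0 <= (-1) ^+ n * derive1n n f t.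

Definition int0 {R : realType} (t0 : R) (g : R -> R) : \bar R :=
  (\int[@lebesgue_measure R]_(t in `]0%R, t0%R[%classic) (g t)%:E)%E.

(* Main.v *)
Require Import Defs.
From HB Require Import structures.
From mathcomp Require Import all_boot all_order all_algebra.
From mathcomp Require Import all_classical all_reals all_analysis.
From mathcomp Require Import ring lra.
From mathcomp Require Import measurable_realfun.
Import Order.TTheory GRing.Theory Num.Theory.
Import numFieldNormedType.Exports.

Section S.
Local Open Scope ring_scope.
Local Open Scope classical_set_scope.
Set Implicit Arguments. Unset Strict Implicit.
Context {R : realType}.
Notation mu := (@lebesgue_measure R).

Lemma der_cont (h : R -> R) x : derivable h x 1 -> {for x, continuous h}.
Proof. by move=> d; apply: differentiable_continuous; apply/derivable1_diffP. Qed.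

Lemma powR_der (p x : R) : 0 < x -> derivable (fun y : R => y `^ p) x 1.
Proof. by move=> x0; apply: derivable_powR; rewrite in_itv /= andbT. Qed.

Lemma LRc (h : R -> R) (a b : R) : 0 < a -> (forall t, 0 < t -> derivable h t 1) ->
  a < b -> derivable_oo_LRcontinuous h a b.
Proof.
move=> a0 dh ab; split.
- by move=> x; rewrite in_itv /= => /andP[ax _]; apply: dh; apply: lt_trans a0 ax.
- by apply: cvg_at_right_filter; apply: der_cont; apply: dh.
- by apply: cvg_at_left_filter; apply: der_cont; apply: dh; apply: lt_trans ab.
Qed.

Lemma wcont (h : R -> R) (a b : R) : 0 < a -> (forall t, 0 < t -> derivable h t 1) ->
  {within `[a, b], continuous h}.
Proof.
move=> a0 dh; apply: continuous_in_subspaceT => x; rewrite inE /= in_itv /= => /andP[ax _].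
by apply: der_cont; apply: dh; apply: lt_le_trans ax.
Qed.

Lemma compact_step (g : R -> R) (beta d t0 : R) : 0 < d -> d < t0 -> -1 < beta ->
  (forall t, 0 < t -> derivable g t 1) ->
  (forall t, 0 < t -> derivable (derive1 g) t 1) ->
  (\int[mu]_(x in `[d, t0]) ((x `^ (1 + beta) - d `^ (1 + beta)) * derive1 g x)%:E =
   ((t0 `^ (1 + beta) - d `^ (1 + beta)) * g t0)%:E -
   \int[mu]_(x in `[d, t0]) ((1 + beta) * x `^ beta * g x)%:E)%E.
Proof.
move=> d0 dt0 b1 dg dgd.
have ebeta : 1 + beta - 1 = beta by ring.
rewrite (@integration_by_parts R (fun x => x `^ (1 + beta) - d `^ (1 + beta)) g
   (fun x => (1 + beta) * x `^ beta) (derive1 g) d t0 dt0).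
- by rewrite subrr mul0r subr0.
- apply: continuous_in_subspaceT => x; rewrite inE /= in_itv /= => /andP[ax _].
  apply: der_cont; apply: derivableM => //.
  by apply: powR_der; apply: lt_le_trans ax.
- apply: LRc => // t t0'; apply: derivableB => //.
  exact: powR_der.
- move=> x; rewrite in_itv /= => /andP[dx _].
  have x0 : 0 < x by apply: lt_trans dx.
  rewrite derive1E deriveB //; last exact: powR_der.
  rewrite derive_cst subr0 -derive1E powR_derive1 ?ebeta // in_itv /= andbT //.
- exact: wcont.
- exact: LRc.
- by [].
Qed.

Lemma mcont (h : R -> R) (D : set R) : D `<=` `]0, +oo[ ->
  (forall t, 0 < t -> {for t, continuous h}) -> measurable_fun D h.
Proof.
move=> sD ch; apply: (measurable_funS _ sD) => //.
apply: measurable_realfun.open_continuous_measurable_fun; first exact: interval_open.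
by move=> x; rewrite inE /= in_itv /= andbT; apply: ch.
Qed.

Lemma compact_bound (g : R -> R) (beta d t0 : R) : 0 < d -> d < t0 -> -1 < beta ->
  (forall t, 0 < t -> derivable g t 1) ->
  (forall t, 0 < t -> derivable (derive1 g) t 1) ->
  (\int[mu]_(x in `[d, t0[) (derive1 g x * (x `^ (1 + beta) - d `^ (1 + beta)))%:E
   <= (Num.max (g t0) 0 * t0 `^ (1 + beta))%:E
      + (1 + beta)%:E * int0 t0 (fun t => `|g t| * t `^ beta)%R)%E.
Proof.
move=> d0 dt0 b1 dg dgd.
have sub1 : forall b1 b2, [set` Interval (BSide b1 d) b2] `<=` `]0, +oo[.
  move=> b b' x /= /[!in_itv] /= /andP[+ _]; rewrite andbT.
  by case: b => /= dx; [apply: lt_le_trans dx|apply: lt_trans dx].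
have pc : forall p, forall t : R, 0 < t -> {for t, continuous (fun y : R => y `^ p)}.
  by move=> p t t0'; apply: der_cont; apply: powR_der.
rewrite integral_itv_bndo_bndc; last first.
  apply/measurable_realfun.measurable_EFinP; apply: mcont => // t t0'.
  apply: continuousM; first exact: der_cont (dgd _ t0').
  apply: continuousB; [exact: pc|exact: cvg_cst].
under eq_integral do rewrite mulrC.
rewrite compact_step //.
apply: leeD.
  rewrite lee_fin.
  have h1 : 0 <= d `^ (1 + beta) by apply: powR_ge0.
  have h2 : d `^ (1 + beta) <= t0 `^ (1 + beta).
    by apply: ge0_ler_powR; rewrite ?nnegrE; try lra; apply: ltW.
  have h3 : g t0 <= Num.max (g t0) 0 by rewrite le_max lexx.
  have h4 : 0 <= Num.max (g t0) 0 by rewrite le_max lexx orbT.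
  nra.
set J := (\int[mu]_(x in _) _)%E.
have mJ : measurable_fun `[d, t0] (fun x => (1 + beta) * x `^ beta * g x).
  apply: mcont => // t t0'.
  apply: continuousM; last exact: der_cont (dg _ t0').
  apply: continuousM; [exact: cvg_cst|exact: pc].
have mG : measurable_fun `]0, t0[ (fun t => `|g t| * t `^ beta).
  apply: mcont.
    by move=> x /= /[!in_itv] /= /andP[x0 _]; rewrite x0.
  move=> t t0'; apply: continuousM; last exact: pc.
  apply: (@continuous_comp _ _ _ g Num.norm); first exact: der_cont (dg _ t0').
  exact: norm_continuous.
apply: (le_trans (lee_abs _)); rewrite abseN.
apply: (le_trans (le_abse_integral _ _ _)) => //.
  exact/measurable_realfun.measurable_EFinP.
have -> : (\int[mu]_(x in `[d, t0]) `|((1 + beta) * x `^ beta * g x)%:E| =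
   \int[mu]_(x in `[d, t0]) ((1 + beta)%:E * (`|g x| * x `^ beta)%:E))%E.
  apply: eq_integral => x; rewrite inE /= in_itv /= => /andP[dx _].
  rewrite -EFinM normrM normrM (ger0_norm (powR_ge0 _ _)) ger0_norm; last by lra.
  by congr EFin; ring.
have mG' : measurable_fun `[d, t0[ (fun t => `|g t| * t `^ beta).
  apply: measurable_funS mG => //.
  move=> x /= /[!in_itv] /= /andP[dx ->]; rewrite andbT.
  exact: lt_le_trans dx.
rewrite ge0_integralZl_EFin //; last by lra.
rewrite -integral_itv_bndo_bndc; last exact/measurable_realfun.measurable_EFinP.
apply: lee_pmul => //; first by rewrite lee_fin; lra.
  by apply: integral_ge0 => x _; rewrite lee_fin mulr_ge0 // powR_ge0.
apply: ge0_subset_integral => //.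
- exact/measurable_realfun.measurable_EFinP.
- by move=> x _; rewrite lee_fin mulr_ge0 // powR_ge0.
- move=> x /= /[!in_itv] /= /andP[dx ->]; rewrite andbT.
  exact: lt_le_trans dx.
by move=> x _; rewrite lee_fin mulr_ge0 // powR_ge0.
apply/measurable_realfun.measurable_EFinP; apply: mcont => //.
  move=> t t0'; apply: continuousM; last exact: pc.
  apply: (@continuous_comp _ _ _ g Num.norm); first exact: der_cont (dg _ t0').
  exact: norm_continuous.
Qed.
End S.

Section S2.
Local Open Scope ring_scope.
Local Open Scope classical_set_scope.
Set Implicit Arguments. Unset Strict Implicit.
Context {R : realType}.
Notation mu := (@lebesgue_measure R).

Lemma key (g : R -> R) (beta t0 : R) : 0 < t0 -> -1 < beta ->
  (forall t, 0 < t -> derivable g t 1) ->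
  (forall t, 0 < t -> derivable (derive1 g) t 1) ->
  (forall t, 0 < t -> 0 <= derive1 g t) ->
  (int0 t0 (fun t => derive1 g t * t `^ (1 + beta))%R
   <= (Num.max (g t0) 0 * t0 `^ (1 + beta))%:E
      + (1 + beta)%:E * int0 t0 (fun t => `|g t| * t `^ beta)%R)%E.
Proof.
move=> t00 b1 dg dgd gd0.
have a0 : 0 < 1 + beta by lra.
have ai : (1 + beta) * (1 + beta)^-1 = 1 by rewrite mulfV // gt_eqF.
pose c n : R := t0 `^ (1 + beta) * harmonic n.+1.
pose d n : R := c n `^ (1 + beta)^-1.
have cpos n : 0 < c n by apply: mulr_gt0; [exact: powR_gt0|exact: harmonic_gt0].
have dpos n : 0 < d n by rewrite powR_gt0.
have dpow n : d n `^ (1 + beta) = c n.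
  by rewrite /d -powRrM mulVf ?gt_eqF // powRr1 // ltW.
have inv (x : R) : 0 <= x -> (x `^ (1 + beta)) `^ (1 + beta)^-1 = x.
  by move=> x0; rewrite -powRrM ai powRr1.
have dle (x : R) n : 0 < x -> c n <= x `^ (1 + beta) -> d n <= x.
  move=> x0 cx; rewrite -(inv x (ltW x0)) /d.
  by apply: ge0_ler_powR => //; rewrite ?nnegrE ?invr_ge0 ?(ltW a0) ?(ltW (cpos n)) ?powR_ge0.
have dlt n : d n < t0.
  rewrite -(inv t0 (ltW t00)) /d.
  apply: gt0_ltr_powR; rewrite ?invr_gt0 ?nnegrE ?(ltW (cpos n)) ?powR_ge0 //.
  rewrite /c /= gtr_pMr ?powR_gt0 // invf_lt1 // ltr1n //.
have cmono n m : (n <= m)%N -> c m <= c n.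
  move=> nm; rewrite /c /= ler_pM2l ?powR_gt0 //.
  by rewrite lef_pV2 ?posrE // ler_nat ltnS ltnS.
have dmono n m : (n <= m)%N -> d m <= d n.
  move=> nm; apply: ge0_ler_powR; rewrite ?invr_ge0 ?(ltW a0) ?nnegrE ?(ltW (cpos _)) //.
  exact: cmono.
have cc : c n @[n --> \oo] --> 0.
  have : c n @[n --> \oo] --> t0 `^ (1 + beta) * 0.
    apply: cvgM; first exact: cvg_cst.
    by rewrite (cvg_shiftS (@harmonic R)); exact: cvg_harmonic.
  by rewrite mulr0.
pose D : set R := `]0, t0[.
pose hs n : R -> \bar R := (fun x => (derive1 g x * (x `^ (1 + beta) - d n `^ (1 + beta)))%:E) \_ `[d n, +oo[.
have mD : measurable D by exact: measurable_itv.
have Dpos x : D x -> 0 < x by rewrite /D /= in_itv /= => /andP[].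
have inP x n : (x \in `[d n, +oo[) = (d n <= x).
  by rewrite mem_setE /= in_itv /= andbT.
have hsE x n : d n <= x -> hs n x = (derive1 g x * (x `^ (1 + beta) - d n `^ (1 + beta)))%:E.
  by move=> dx; rewrite /hs patchE inP dx.
have hs0 n x : D x -> (0 <= hs n x)%E.
  move=> Dx; rewrite /hs patchE inP; case: ifP => // dx.
  rewrite lee_fin mulr_ge0 ?gd0 ?Dpos // subr_ge0.
  apply: ge0_ler_powR; rewrite ?nnegrE ?(ltW a0) ?(ltW (dpos n)) //.
  exact: ltW (Dpos _ Dx).
have mhs n : measurable_fun D (hs n).
  apply/measurable_restrict => //.
  apply/measurable_realfun.measurable_EFinP; apply: mcont.
    by move=> x [/Dpos x0 _] /=; rewrite in_itv /= andbT.
  move=> t t0'; apply: continuousM; first exact: der_cont (dgd _ t0').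
  apply: continuousB; last exact: cvg_cst.
  by apply: der_cont; apply: powR_der.
have hsnd x : D x -> {homo hs^~ x : n m / (n <= m)%N >-> (n <= m)%E}.
  move=> Dx n m nm /=.
  have [dx|dx] := leP (d n) x; last first.
    have dx2 : (d n <= x) = false by rewrite leNgt dx.
    by rewrite /hs patchE inP dx2 /=; exact: hs0.
  rewrite hsE // hsE; last exact: le_trans (dmono _ _ nm) dx.
  rewrite lee_fin; apply: ler_wpM2l; first exact: gd0 (Dpos _ Dx).
  rewrite !dpow lerD2l lerN2; exact: cmono.
have hslim x : D x -> hs^~ x @ \oo --> (derive1 g x * x `^ (1 + beta))%:E.
  move=> Dx.
  have xa : 0 < x `^ (1 + beta) by apply: powR_gt0; exact: Dpos.
  have ev : \forall n \near \oo, c n < x `^ (1 + beta) by exact: cvgr_lt cc _ xa.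
  have E1 : {near \oo, (fun n => (derive1 g x * (x `^ (1 + beta) - c n))%:E) =1 hs^~ x}.
    near=> n; rewrite hsE ?dpow //.
    by apply: dle; [exact: Dpos|apply: ltW; near: n].
  apply: cvg_trans (near_eq_cvg E1) _.
  apply: cvg_EFin; first exact: nearW.
  have : (fun n => derive1 g x * (x `^ (1 + beta) - c n)) @ \oo -->
     derive1 g x * (x `^ (1 + beta) - 0).
    apply: cvgM; first exact: cvg_cst.
    by apply: cvgB; [exact: cvg_cst|exact: cc].
  by rewrite subr0.
rewrite /int0.
have -> : (\int[mu]_(x in D) (derive1 g x * x `^ (1 + beta))%:E =
    \int[mu]_(x in D) limn (hs^~ x))%E.
  apply: eq_integral => x /[!inE] Dx.
  by apply/esym/cvg_lim => //; exact: hslim.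
rewrite (monotone_convergence mu mD mhs hs0 hsnd).
apply: lime_le.
  apply: ereal_nondecreasing_is_cvgn => n m nm /=.
  apply: ge0_le_integral.
  - exact: mD.
  - exact: hs0.
  - exact: mhs.
  - exact: mhs.
  - by move=> x Dx; exact: hsnd.
apply: nearW => n.
rewrite /hs -integral_mkcondr.
have -> : D `&` `[d n, +oo[ = `[d n, t0[.
  apply/seteqP; split => x /=; rewrite !in_itv /= ?andbT.
    move=> [Dx dx]; move: Dx; rewrite /D /= in_itv /= => /andP[_ ->].
    by rewrite dx.
  move=> /andP[dx xt]; split => //; rewrite /D /= in_itv /= xt andbT.
  exact: lt_le_trans (dpos n) dx.
exact: compact_bound.
Unshelve. all: by end_near.
Qed.
End S2.

Section S3.
Local Open Scope ring_scope.
Local Open Scope classical_set_scope.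
Set Implicit Arguments. Unset Strict Implicit.
Context {R : realType}.
Notation mu := (@lebesgue_measure R).

Lemma scale_facts (h : R -> R) (s : R) :
  (forall t, 0 < t -> derivable h t 1) ->
  (forall t, 0 < t -> derivable (derive1 h) t 1) ->
  [/\ forall t, 0 < t -> derive1 (s \*: h) t = s * derive1 h t,
      forall t, 0 < t -> derivable (s \*: h) t 1 &
      forall t, 0 < t -> derivable (derive1 (s \*: h)) t 1].
Proof.
move=> dh dhd.
have E t : 0 < t -> derive1 (s \*: h) t = s * derive1 h t.
  by move=> t0; rewrite !derive1E deriveZ //; apply: dh.
split.
- exact: E.
- by move=> t t0; apply: derivableZ; apply: dh.
- move=> t t0; apply: (@near_eq_derivable _ _ _ (s \*: derive1 h)).
    near=> y; rewrite /= E //; near: y; exact: lt_nbhsr.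
  by apply: derivableZ; apply: dhd.
Unshelve. all: by end_near.
Qed.

Lemma part2 (beta : R) (f : R -> R) (t0 : R) : -1 < beta -> 0 < t0 ->
  smooth_pos f ->
  ((forall t, 0 < t -> 0 <= derive1 f t) \/
   (forall t, 0 < t -> derive1 f t <= 0)) ->
  (int0 t0 (fun t => `|derive1 f t| * t `^ (1 + beta))%R
     <= (1 + beta)%R%:E * int0 t0 (fun t => `|f t| * t `^ beta)%R
        + (`|f t0| * t0 `^ (1 + beta))%R%:E)%E.
Proof.
move=> b1 t00 sm sg.
have dh : forall t, 0 < t -> derivable f t 1 := fun t ht => sm 0%N t ht.
have dhd : forall t, 0 < t -> derivable (derive1 f) t 1 := fun t ht => sm 1%N t ht.
have gen : forall s : R, `|s| = 1 -> (forall t, 0 < t -> 0 <= s * derive1 f t) ->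
  (int0 t0 (fun t => `|derive1 f t| * t `^ (1 + beta))%R
     <= (1 + beta)%R%:E * int0 t0 (fun t => `|f t| * t `^ beta)%R
        + (`|f t0| * t0 `^ (1 + beta))%R%:E)%E.
  move=> s s1 sgn.
  have [E d1 d2] := scale_facts s dh dhd.
  have gd0 : forall t, 0 < t -> 0 <= derive1 (s \*: f) t.
    by move=> t ht; rewrite E //; exact: sgn.
  have K := key t00 b1 d1 d2 gd0.
  have -> : int0 t0 (fun t => `|derive1 f t| * t `^ (1 + beta))%R =
            int0 t0 (fun t => derive1 (s \*: f) t * t `^ (1 + beta))%R.
    apply: eq_integral => x /[!inE] /= /[!in_itv] /= /andP[x0 _].
    by rewrite E // -(ger0_norm (sgn x x0)) normrM s1 mul1r.
  apply: (le_trans K).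
  have -> : int0 t0 (fun t => `|(s \*: f) t| * t `^ beta)%R =
            int0 t0 (fun t => `|f t| * t `^ beta)%R.
    by apply: eq_integral => x _ /=; rewrite normrM s1 mul1r.
  rewrite addeC; apply: leeD2l; rewrite lee_fin.
  apply: ler_wpM2r; first exact: powR_ge0.
  rewrite ge_max normr_ge0 andbT.
  by apply: le_trans (ler_norm _) _; rewrite /= normrM s1 mul1r.
case: sg => sg.
- by apply: (gen 1); [rewrite normr1|move=> t ht; rewrite mul1r; exact: sg].
- apply: (gen (-1)); first by rewrite normrN1.
  by move=> t ht; rewrite mulN1r oppr_ge0; exact: sg.
Qed.

Lemma part1 (beta : R) (k : nat) : -1 < beta -> forall (f : R -> R) (t0 : R), 0 < t0 ->
  completely_monotone f ->
  (int0 t0 (fun t => `|derive1n k f t| * t `^ (k%:R + beta))%R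
     <= (\prod_(i < k) (1 + (i%:R + beta)))%:E * int0 t0 (fun t => f t * t `^ beta)%R)%E.
Proof.
move=> b1; elim: k => [|k IH] f t0 t00 [sm cm].
  rewrite big_ord0 mul1e le_eqVlt; apply/orP; left; apply/eqP.
  apply: eq_integral => x /[!inE] /= /[!in_itv] /= /andP[x0 _].
  have := cm 0%N x x0; rewrite expr0 mul1r /= => fx.
  by rewrite ger0_norm // add0r.
set h := derive1n k f.
have dh : forall t, 0 < t -> derivable h t 1 := fun t ht => sm k t ht.
have dhd : forall t, 0 < t -> derivable (derive1 h) t 1.
  by move=> t ht; rewrite /h -derive1nS; exact: sm.
have bk : -1 < k%:R + beta by have := ler0n R k; lra.
pose s : R := (-1) ^+ k.+1.
have [E d1 d2] := scale_facts s dh dhd.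
have gd0 : forall t, 0 < t -> 0 <= derive1 (s \*: h) t.
  by move=> t ht; rewrite E // /h -derive1nS; exact: cm.
have K := key t00 bk d1 d2 gd0.
have -> : int0 t0 (fun t => `|derive1n k.+1 f t| * t `^ (k.+1%:R + beta))%R =
          int0 t0 (fun t => derive1 (s \*: h) t * t `^ (1 + (k%:R + beta)))%R.
  apply: eq_integral => x /[!inE] /= /[!in_itv] /= /andP[x0 _].
  rewrite -(ger0_norm (gd0 x x0)) E // normrM normrX normrN1 expr1n mul1r.
  by rewrite /h -derive1nS mulrS addrA.
apply: (le_trans K).
have -> : Num.max ((s \*: h) t0) 0 = 0.
  apply/max_r; change (s * h t0 <= 0); rewrite /s exprS mulN1r mulNr oppr_le0.
  exact: cm.
rewrite mul0r add0e.
have -> : int0 t0 (fun t => `|(s \*: h) t| * t `^ (k%:R + beta))%R =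
          int0 t0 (fun t => `|h t| * t `^ (k%:R + beta))%R.
  by apply: eq_integral => x _ /=; rewrite normrM normrX normrN1 expr1n mul1r.
have -> : \prod_(i < k.+1) (1 + (i%:R + beta)) =
          (1 + (k%:R + beta)) * \prod_(i < k) (1 + (i%:R + beta)).
  by rewrite big_ord_recr /= mulrC.
rewrite EFinM -muleA.
apply: lee_pmul => //.
- by rewrite lee_fin; lra.
- by apply: integral_ge0 => x _; rewrite lee_fin mulr_ge0 // powR_ge0.
- exact: IH.
Qed.
End S3.
Local Open Scope ring_scope.


Theorem lemma6p4 (R : realType) :
  (* (1) *)
  (forall (beta : R) (k : nat), -1 < beta ->
     exists C : R, 0 < C /\
       forall (f : R -> R) (t0 : R), 0 < t0 ->
         completely_monotone f ->
         (int0 t0 (fun t => `|f t| * t `^ beta)%R < +oo)%E ->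
         (int0 t0 (fun t => `|derive1n k f t| * t `^ (k%:R + beta))%R
            <= C%:E * int0 t0 (fun t => f t * t `^ beta)%R)%E)
  /\
  (* (2) *)
  (forall (beta : R) (f : R -> R) (t0 : R), -1 < beta -> 0 < t0 ->
     smooth_pos f ->
     (int0 t0 (fun t => `|f t| * t `^ beta)%R < +oo)%E ->
     ((forall t, 0 < t -> 0 <= derive1 f t) \/
      (forall t, 0 < t -> derive1 f t <= 0)) ->
     (int0 t0 (fun t => `|derive1 f t| * t `^ (1 + beta))%R
        <= (1 + beta)%R%:E * int0 t0 (fun t => `|f t| * t `^ beta)%R
           + (`|f t0| * t0 `^ (1 + beta))%R%:E)%E).
Proof.
split.
- move=> beta k b1; exists (\prod_(i < k) (1 + (i%:R + beta))); split.
    apply: prodr_gt0 => i _; have := ler0n R i; lra.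
  by move=> f t0 t00 cm _; exact: part1.
- by move=> beta f t0 b1 t00 sm _ sg; exact: part2.
Qed.
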